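(* There exists a recursive coloring function $c_0:\mathbb{N}\rightarrow \{0,1\}^2$ such that for every infinite set $A\subseteq\mathbb{Z}^+$ that does not have weak apartness, $FS^{\leq 2}(A)$ is not monochromatic under $c_0$ (i.e. $A$ is not a solution to $c_0$ for $\mathrm{HT}^{\leq 2}$).
   Context: For $x=\sum_{i=0}^{k}2^{n_i}\in\mathbb{Z}^+$ with $n_0<\cdots<n_k$, set $\mu(x)=n_k$ and $\lambda(x)=n_0$. For each $n$, $B^n=\{x\in\mathbb{Z}^+:\mu(x)=n\}$. A set $A$ has weak apartness if for every natural number $m$, $B^m\cap A$ has at most one element, and for every natural number $l$, there are at most two $x\in A$ with $\lambda(x)=l$. $FS^{\leq 2}(A)=\{\sum_{x\in F}x: F\subseteq A,\ F\text{ nonempty},\ |F|\leq 2\}$. *)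

(* Defs.v *)
From Stdlib Require Import Arith List.
Import ListNotations.

Inductive code : Type :=
| CZero : code
| CSucc : code
| CProj : nat -> code
| CComp : code -> list code -> code
| CPrimRec : code -> code -> code
| CMu : code -> code.

Inductive eval : code -> list nat -> nat -> Prop :=
| ev_zero : forall v, eval CZero v 0
| ev_succ : forall x v, eval CSucc (x :: v) (S x)
| ev_proj : forall i v, i < length v -> eval (CProj i) v (nth i v 0)
| ev_comp : forall f gs v ys z,
    eval_list gs v ys -> eval f ys z -> eval (CComp f gs) v z
| ev_prec0 : forall f g v z, eval f v z -> eval (CPrimRec f g) (0 :: v) z
| ev_precS : forall f g n v y z,
    eval (CPrimRec f g) (n :: v) y -> eval g (n :: y :: v) z ->
    eval (CPrimRec f g) (S n :: v) z
| ev_mu : forall f v n,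
    eval f (n :: v) 0 ->
    (forall m, m < n -> exists k, eval f (m :: v) (S k)) ->
    eval (CMu f) v n
with eval_list : list code -> list nat -> list nat -> Prop :=
| evl_nil : forall v, eval_list [] v []
| evl_cons : forall g gs v y ys,
    eval g v y -> eval_list gs v ys -> eval_list (g :: gs) v (y :: ys).

Definition recursive_fun (f : nat -> nat) : Prop :=
  exists p : code, forall n, eval p [n] (f n).

(* A colouring into {0,1}^2 (encoded as bool * bool) is recursive if its
   encoding (b1,b2) |-> 2*b1 + b2 is recursive. *)
Definition enc2 (c : bool * bool) : nat :=
  2 * Nat.b2n (fst c) + Nat.b2n (snd c).

Definition recursive_coloring (c : nat -> bool * bool) : Prop :=
  recursive_fun (fun n => enc2 (c n)).

Definition is_mu (x n : nat) : Prop :=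
  Nat.testbit x n = true /\ forall m, n < m -> Nat.testbit x m = false.

Definition is_lambda (x l : nat) : Prop :=
  Nat.testbit x l = true /\ forall m, m < l -> Nat.testbit x m = false.

Definition B (n : nat) (x : nat) : Prop := 0 < x /\ is_mu x n.

Definition infinite_set (A : nat -> Prop) : Prop :=
  forall N, exists x, A x /\ N < x.

Definition weak_apartness (A : nat -> Prop) : Prop :=
  (forall m x y, B m x -> A x -> B m y -> A y -> x = y) /\
  (forall l x y z, A x -> A y -> A z ->
     is_lambda x l -> is_lambda y l -> is_lambda z l ->
     x = y \/ y = z \/ x = z).

Definition FS2 (A : nat -> Prop) (s : nat) : Prop :=
  A s \/ exists x y, A x /\ A y /\ x <> y /\ s = x + y.

Definition monochromatic (c : nat -> bool * bool) (S : nat -> Prop) : Prop :=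
  exists col, forall s, S s -> c s = col.

(* Main.v *)
Require Import Defs.
From Stdlib Require Import Arith List Lia.
Import ListNotations.

Lemma proj_ok i v x : nth i v 0 = x -> i < length v -> eval (CProj i) v x.
Proof. intros <- H. now apply ev_proj. Qed.

Lemma comp1 f g v y z : eval g v y -> eval f [y] z -> eval (CComp f [g]) v z.
Proof. intros. eapply ev_comp; [|eassumption]. repeat constructor; auto. Qed.

Lemma comp2 f g1 g2 v y1 y2 z : eval g1 v y1 -> eval g2 v y2 -> eval f [y1; y2] z ->
  eval (CComp f [g1; g2]) v z.
Proof. intros. eapply ev_comp; [|eassumption]. repeat constructor; auto. Qed.

Definition cone := CComp CSucc [CZero].
Lemma cone_ok v : eval cone v 1.
Proof. apply comp1 with 0; constructor. Qed.

Definition cpred := CPrimRec CZero (CProj 0).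
Lemma cpred_ok n : eval cpred [n] (pred n).
Proof.
  induction n.
  - constructor. constructor.
  - eapply ev_precS. exact IHn. apply proj_ok; simpl; auto; lia.
Qed.

Definition cmonus := CPrimRec (CProj 0) (CComp cpred [CProj 1]).
Lemma cmonus_ok b a : eval cmonus [b; a] (a - b).
Proof.
  induction b.
  - constructor. apply proj_ok; simpl; auto; lia.
  - eapply ev_precS. exact IHb. apply comp1 with (a - b).
    apply proj_ok; simpl; auto; lia.
    replace (a - S b) with (pred (a - b)) by lia. apply cpred_ok.
Qed.

Definition cpar := CPrimRec CZero (CComp cmonus [CProj 1; cone]).
Lemma cpar_ok n : eval cpar [n] (Nat.b2n (Nat.odd n)).
Proof.
  induction n.
  - constructor. constructor.
  - eapply ev_precS. exact IHn. eapply comp2.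
    apply proj_ok; simpl; [reflexivity|lia]. apply cone_ok.
    replace (Nat.b2n (Nat.odd (S n))) with (1 - Nat.b2n (Nat.odd n)).
    apply cmonus_ok.
    rewrite Nat.odd_succ, <- Nat.negb_odd. destruct (Nat.odd n); reflexivity.
Qed.

Definition cadd := CPrimRec (CProj 0) (CComp CSucc [CProj 1]).
Lemma cadd_ok n m : eval cadd [n; m] (n + m).
Proof.
  induction n.
  - constructor. apply proj_ok; simpl; auto; lia.
  - eapply ev_precS. exact IHn. apply comp1 with (n + m).
    apply proj_ok; simpl; auto; lia. constructor.
Qed.

Lemma div2_succ n : Nat.div2 (S n) = Nat.div2 n + Nat.b2n (Nat.odd n).
Proof.
  assert (H : forall n, Nat.div2 (S n) = Nat.div2 n + Nat.b2n (Nat.odd n) /\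
     Nat.div2 (S (S n)) = Nat.div2 (S n) + Nat.b2n (Nat.odd (S n))).
  { induction n0.
    - split; reflexivity.
    - destruct IHn0 as [H1 H2]. split; [exact H2|].
      change (Nat.div2 (S (S (S n0)))) with (S (Nat.div2 (S n0))).
      change (Nat.div2 (S (S n0))) with (S (Nat.div2 n0)).
      rewrite H1. replace (Nat.odd (S (S n0))) with (Nat.odd n0).
      lia. rewrite !Nat.odd_succ, Nat.even_succ. reflexivity. }
  apply H.
Qed.

Definition cdiv2 := CPrimRec CZero (CComp cadd [CProj 1; CComp cpar [CProj 0]]).
Lemma cdiv2_ok n : eval cdiv2 [n] (Nat.div2 n).
Proof.
  induction n.
  - constructor. constructor.
  - eapply ev_precS. exact IHn. eapply comp2.
    apply proj_ok; simpl; [reflexivity|lia].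
    apply comp1 with n. apply proj_ok; simpl; [reflexivity|lia]. apply cpar_ok.
    rewrite div2_succ. apply cadd_ok.
Qed.

Definition cshr := CPrimRec (CProj 0) (CComp cdiv2 [CProj 1]).
Lemma cshr_ok k n : eval cshr [k; n] (Nat.shiftr n k).
Proof.
  induction k.
  - constructor. apply proj_ok; simpl; auto; lia.
  - eapply ev_precS. exact IHk. apply comp1 with (Nat.shiftr n k).
    apply proj_ok; simpl; auto; lia. apply cdiv2_ok.
Qed.

Definition clog := CMu (CComp cshr [CComp CSucc [CProj 0]; CProj 1]).
Lemma clog_ok n : eval clog [n] (Nat.log2 n).
Proof.
  constructor.
  - eapply comp2. apply comp1 with (Nat.log2 n). apply proj_ok; simpl; auto; lia.
    constructor. apply proj_ok; simpl; auto; lia.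
    assert (E : Nat.shiftr n (S (Nat.log2 n)) = 0).
    { apply Nat.shiftr_eq_0_iff. destruct n. left; auto. right; lia. }
    pose proof (cshr_ok (S (Nat.log2 n)) n) as H. rewrite E in H. exact H.
  - intros m Hm. destruct (Nat.shiftr n (S m)) eqn:E.
    + apply Nat.shiftr_eq_0_iff in E. destruct E as [->|]; [change (Nat.log2 0) with 0 in Hm|]; lia.
    + exists n0. eapply comp2. apply comp1 with m. apply proj_ok; simpl; auto; lia.
      constructor. apply proj_ok; simpl; auto; lia. rewrite <- E. apply cshr_ok.
Qed.

Fixpoint first (P : nat -> bool) (k fuel : nat) : nat :=
  match fuel with 0 => k | S f => if P k then k else first P (S k) f end.

Lemma first_spec P fuel : forall k, (exists j, k <= j <= k + fuel /\ P j = true) ->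
  P (first P k fuel) = true /\ k <= first P k fuel /\
  forall m, k <= m < first P k fuel -> P m = false.
Proof.
  induction fuel; intros k [j [Hj Pj]]; simpl.
  - replace k with j by lia. split; auto. split; auto. intros; lia.
  - destruct (P k) eqn:Pk.
    + split; auto. split; auto. intros; lia.
    + destruct (IHfuel (S k)) as [H1 [H2 H3]].
      { exists j. split; auto. assert (j <> k) by (intro; subst; congruence). lia. }
      split; auto. split; [lia|]. intros m Hm.
      destruct (Nat.eq_dec m k); [subst; auto|]. apply H3; lia.
Qed.

Definition Plam (n k : nat) : bool := Nat.testbit n k || (n <=? k).
Definition lam (n : nat) : nat := first (Plam n) 0 n.

Lemma lam_spec n : Plam n (lam n) = true /\ forall m, m < lam n -> Plam n m = false.
Proof.
  destruct (first_spec (Plam n) n 0) as [H1 [_ H3]].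
  { exists n. split. lia. unfold Plam. rewrite Nat.leb_refl. apply Bool.orb_true_r. }
  split; auto. intros; apply H3; unfold lam in *; lia.
Qed.

Definition cbit := CComp cpar [cshr].
Lemma cbit_ok k n : eval cbit [k; n] (Nat.b2n (Nat.testbit n k)).
Proof.
  apply comp1 with (Nat.shiftr n k). apply cshr_ok.
  replace (Nat.testbit n k) with (Nat.odd (Nat.shiftr n k)). apply cpar_ok.
  rewrite <- Nat.bit0_odd, Nat.shiftr_spec'. reflexivity.
Qed.

Definition cA := CComp cmonus [cbit; cone].
Definition cBk := CComp cmonus [CProj 0; CProj 1].
Definition ch := CComp cmonus [CComp cmonus [cBk; cA]; cA].
Definition hf k n := let A := 1 - Nat.b2n (Nat.testbit n k) in A - (A - (n - k)).

Lemma ch_ok k n : eval ch [k; n] (hf k n).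
Proof.
  assert (HA : eval cA [k; n] (1 - Nat.b2n (Nat.testbit n k))).
  { eapply comp2. apply cbit_ok. apply cone_ok. apply cmonus_ok. }
  assert (HB : eval cBk [k; n] (n - k)).
  { eapply comp2; try (apply proj_ok; simpl; [reflexivity|lia]). apply cmonus_ok. }
  unfold hf. eapply comp2; [|exact HA|apply cmonus_ok].
  eapply comp2; [exact HB|exact HA|apply cmonus_ok].
Qed.

Lemma hf_zero k n : hf k n = 0 <-> Plam n k = true.
Proof.
  unfold hf, Plam. destruct (Nat.testbit n k); cbn [Nat.b2n orb].
  - split; intros; lia || reflexivity.
  - destruct (n <=? k) eqn:E.
    + apply Nat.leb_le in E. split; intros; lia || reflexivity.
    + apply Nat.leb_gt in E. split; intros; [lia|discriminate].
Qed.

Definition clam := CMu ch.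
Lemma clam_ok n : eval clam [n] (lam n).
Proof.
  destruct (lam_spec n) as [H1 H2]. constructor.
  - pose proof (ch_ok (lam n) n) as H. apply hf_zero in H1. rewrite H1 in H. exact H.
  - intros m Hm. specialize (H2 m Hm). destruct (hf m n) eqn:E.
    + apply hf_zero in E. congruence.
    + exists n0. rewrite <- E. apply ch_ok.
Qed.

Definition c0 (n : nat) : bool * bool := (Nat.odd (Nat.log2 n), Nat.odd (lam n)).

Definition cfinal := CComp cadd [CComp cadd [CComp cpar [clog]; CComp cpar [clog]];
                                 CComp cpar [clam]].

Lemma c0_rec : recursive_coloring c0.
Proof.
  exists cfinal. intro n. unfold enc2, c0; cbn [fst snd].
  assert (H1 : eval (CComp cpar [clog]) [n] (Nat.b2n (Nat.odd (Nat.log2 n)))).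
  { apply comp1 with (Nat.log2 n). apply clog_ok. apply cpar_ok. }
  assert (H2 : eval (CComp cpar [clam]) [n] (Nat.b2n (Nat.odd (lam n)))).
  { apply comp1 with (lam n). apply clam_ok. apply cpar_ok. }
  eapply comp2; [eapply comp2; [exact H1|exact H1|apply cadd_ok]|exact H2|].
  replace (2 * Nat.b2n (Nat.odd (Nat.log2 n)) + Nat.b2n (Nat.odd (lam n))) with
    (Nat.b2n (Nat.odd (Nat.log2 n)) + Nat.b2n (Nat.odd (Nat.log2 n)) + Nat.b2n (Nat.odd (lam n))) by lia.
  apply cadd_ok.
Qed.

Lemma mu_log2 x n : 0 < x -> is_mu x n -> Nat.log2 x = n.
Proof.
  intros Hx [H1 H2].
  destruct (Nat.lt_trichotomy n (Nat.log2 x)) as [H|[H|H]]; auto.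
  - specialize (H2 _ H). rewrite Nat.bit_log2 in H2 by lia. discriminate.
  - rewrite Nat.bits_above_log2 in H1 by lia. discriminate.
Qed.

Lemma lambda_shape x l : 0 < x -> is_lambda x l -> exists a, x = 2 ^ l * (2 * a + 1).
Proof.
  intros Hx [H1 H2].
  assert (Hm : x mod 2 ^ l = 0).
  { apply Nat.bits_inj_0. intro m. destruct (Nat.lt_ge_cases m l).
    - rewrite Nat.mod_pow2_bits_low by auto. auto.
    - apply Nat.mod_pow2_bits_high; auto. }
  assert (Hq : Nat.odd (x / 2 ^ l) = true).
  { rewrite <- Nat.shiftr_div_pow2, <- Nat.bit0_odd, Nat.shiftr_spec'. exact H1. }
  apply Nat.odd_spec in Hq. destruct Hq as [a Ha]. exists a.
  rewrite <- Ha. pose proof (Nat.div_mod x (2 ^ l)) as E.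
  rewrite Hm in E. rewrite E at 1. lia. apply Nat.pow_nonzero. lia.
Qed.

Lemma lam_shape l a : lam (2 ^ l * (2 * a + 1)) = l.
Proof.
  set (n := 2 ^ l * (2 * a + 1)).
  assert (Hn : n = (2 * a + 1) * 2 ^ l) by (unfold n; lia).
  assert (Pl : Plam n l = true).
  { unfold Plam. rewrite Hn, Nat.mul_pow2_bits_high, Nat.sub_diag by lia.
    rewrite Nat.testbit_odd_0. reflexivity. }
  assert (Pm : forall m, m < l -> Plam n m = false).
  { intros m Hm. unfold Plam. rewrite Hn, Nat.mul_pow2_bits_low by auto. simpl.
    apply Nat.leb_gt. pose proof (Nat.pow_gt_lin_r 2 l ltac:(lia)). nia. }
  destruct (lam_spec n) as [H1 H2].
  destruct (Nat.lt_trichotomy (lam n) l) as [H|[H|H]]; auto.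
  - rewrite Pm in H1 by auto. discriminate.
  - rewrite H2 in Pl by auto. discriminate.
Qed.

Lemma pair_sum l x y a b : x = 2 ^ l * (2 * a + 1) -> y = 2 ^ l * (2 * b + 1) ->
  (Nat.Even a /\ Nat.Even b \/ Nat.Odd a /\ Nat.Odd b) ->
  exists e, x + y = 2 ^ (S l) * (2 * e + 1).
Proof.
  intros -> -> [[[a' ->] [b' ->]]|[[a' ->] [b' ->]]].
  - exists (a' + b'). rewrite Nat.pow_succ_r'. ring.
  - exists (a' + b' + 1). rewrite Nat.pow_succ_r'. ring.
Qed.

Lemma odd_S_neq m : Nat.odd m <> Nat.odd (S m).
Proof. rewrite Nat.odd_succ, <- Nat.negb_odd. destruct (Nat.odd m); discriminate. Qed.

Lemma conflict A col x y l a b : (forall s, FS2 A s -> c0 s = col) ->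
  A x -> A y -> x <> y -> x = 2 ^ l * (2 * a + 1) -> y = 2 ^ l * (2 * b + 1) ->
  (Nat.Even a /\ Nat.Even b \/ Nat.Odd a /\ Nat.Odd b) -> False.
Proof.
  intros Hm Ax Ay Hxy Hx Hy Hp.
  destruct (pair_sum l x y a b Hx Hy Hp) as [e He].
  assert (E1 : c0 x = col) by (apply Hm; left; auto).
  assert (E2 : c0 (x + y) = col) by (apply Hm; right; exists x, y; auto).
  rewrite <- E2 in E1. unfold c0 in E1. injection E1 as _ E.
  rewrite He, Hx, !lam_shape in E. exact (odd_S_neq l E).
Qed.

Theorem lemma4p1 :
  exists c0 : nat -> bool * bool,
    recursive_coloring c0 /\
    forall A : nat -> Prop,
      (forall x, A x -> 0 < x) ->
      infinite_set A ->
      ~ weak_apartness A ->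
      ~ monochromatic c0 (FS2 A).
Proof.
  exists c0. split; [exact c0_rec|].
  intros A Hpos _ Hwa [col Hm]. apply Hwa. split.
  - intros m x y [Hx0 Bx] Ax [Hy0 By] Ay.
    destruct (Nat.eq_dec x y) as [|Hxy]; auto. exfalso.
    apply mu_log2 in Bx; auto. apply mu_log2 in By; auto.
    assert (Hs : Nat.log2 (x + y) = S m).
    { apply Nat.log2_unique. lia.
      pose proof (Nat.log2_spec x Hx0). pose proof (Nat.log2_spec y Hy0).
      rewrite Bx in *. rewrite By in *. rewrite !Nat.pow_succ_r' in *. lia. }
    assert (E1 : c0 x = col) by (apply Hm; left; auto).
    assert (E2 : c0 (x + y) = col) by (apply Hm; right; exists x, y; auto).
    rewrite <- E2 in E1. unfold c0 in E1. injection E1 as E _.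
    rewrite Hs, Bx in E. exact (odd_S_neq m E).
  - intros l x y z Ax Ay Az Lx Ly Lz.
    destruct (Nat.eq_dec x y) as [|Hxy]; auto.
    destruct (Nat.eq_dec y z) as [|Hyz]; auto.
    destruct (Nat.eq_dec x z) as [|Hxz]; auto. exfalso.
    destruct (lambda_shape x l (Hpos x Ax) Lx) as [a Ha].
    destruct (lambda_shape y l (Hpos y Ay) Ly) as [b Hb].
    destruct (lambda_shape z l (Hpos z Az) Lz) as [c Hc].
    destruct (Nat.Even_or_Odd a), (Nat.Even_or_Odd b), (Nat.Even_or_Odd c).
    all: first
      [ apply (conflict A col x y l a b); auto; tauto
      | apply (conflict A col y z l b c); auto; tauto
      | apply (conflict A col x z l a c); auto; tauto ].
Qed.
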